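(* Let $\lambda>0$, $p\in\mathbb{N}$, and let $f\in C^p\left[0,\frac12\lambda^{-1/2}\right]$ be real-valued. Write $\max$ for the maximum over $\left[0,\frac12\lambda^{-1/2}\right]$. Then at least one of the following inequalities holds: $$\max|f'|\le4^{p+\frac12}\lambda^{\frac12}\max|f|,\qquad\text{or}\qquad \max|f'|\le\left(\frac{\max|f^{(p)}|}{\max|f|}\right)^{\frac1p}4^{p-\frac12}\max|f|.$$ *)

(* Defs.v *)
From Stdlib Require Import Reals.
Open Scope R_scope.

Definition deriv_within (a b : R) (g : R -> R) (x l : R) : Prop :=
  forall eps : R, 0 < eps -> exists delta : R, 0 < delta /\
    forall y : R, a <= y <= b -> y <> x -> Rabs (y - x) < delta ->
      Rabs ((g y - g x) / (y - x) - l) < eps.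

Definition cont_on (a b : R) (g : R -> R) : Prop :=
  forall x : R, a <= x <= b ->
  forall eps : R, 0 < eps -> exists delta : R, 0 < delta /\
    forall y : R, a <= y <= b -> Rabs (y - x) < delta -> Rabs (g y - g x) < eps.

(* D is a family of successive derivatives of D 0 on [a,b] up to order p,
   with D p continuous: i.e. D 0 is in C^p[a,b] with D k = its k-th derivative. *)
Definition Cp_derivs (a b : R) (p : nat) (D : nat -> R -> R) : Prop :=
  cont_on a b (D p) /\
  forall k : nat, (k < p)%nat -> forall x : R, a <= x <= b ->
    deriv_within a b (D k) x (D (S k) x).

Definition is_max_on (a b : R) (g : R -> R) (M : R) : Prop :=
  (exists x : R, a <= x <= b /\ g x = M) /\
  (forall x : R, a <= x <= b -> g x <= M).

(* Real power a^y for a >= 0 and y > 0, with the convention 0^y = 0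
   (Stdlib's Rpower would give Rpower 0 y = 1). *)
Definition rpow (a y : R) : R := if Rle_dec a 0 then 0 else Rpower a y.

(* Main.v *)
Require Import Defs.
From Stdlib Require Import Reals Lra Lia.
From Coquelicot Require Import Coquelicot.
Open Scope R_scope.

Definition clamp (L y : R) := Rmax 0 (Rmin L y).

Lemma clamp_id L y : 0 <= y <= L -> clamp L y = y.
Proof. intros. unfold clamp. rewrite Rmin_right by lra. rewrite Rmax_right; lra. Qed.

Lemma clamp_in L y : 0 <= L -> 0 <= clamp L y <= L.
Proof. intros. unfold clamp. unfold Rmax, Rmin. repeat destruct Rle_dec; lra. Qed.

Lemma clamp_lip L y z : 0 <= L -> Rabs (clamp L y - clamp L z) <= Rabs (y - z).
Proof. intros. unfold clamp, Rmax, Rmin. repeat destruct Rle_dec; unfold Rabs;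
  repeat destruct Rcase_abs; lra. Qed.

Lemma deriv_cont L g x l : 0 <= x <= L -> deriv_within 0 L g x l ->
  forall eps, 0 < eps -> exists delta, 0 < delta /\
    forall y, 0 <= y <= L -> Rabs (y - x) < delta -> Rabs (g y - g x) < eps.
Proof.
  intros Hx Hd eps He.
  destruct (Hd 1 Rlt_0_1) as [d [Hd0 Hd1]].
  exists (Rmin d (eps / (Rabs l + 1))). split.
  { apply Rmin_glb_lt; auto. apply Rdiv_lt_0_compat; auto. pose proof (Rabs_pos l); lra. }
  intros y Hy Hyx.
  destruct (Req_dec y x) as [->|Hne]. { rewrite Rminus_diag, Rabs_R0; auto. }
  assert (Hq := Hd1 y Hy Hne (Rlt_le_trans _ _ _ Hyx (Rmin_l _ _))).
  assert (Hyx2 := Rlt_le_trans _ _ _ Hyx (Rmin_r _ _)).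
  assert (Hpos: 0 < Rabs (y - x)) by (apply Rabs_pos_lt; lra).
  replace (g y - g x) with (((g y - g x)/(y-x)) * (y - x)) by (field; lra).
  rewrite Rabs_mult.
  assert (Rabs ((g y - g x) / (y - x)) <= Rabs l + 1).
  { pose proof (Rabs_triang_inv ((g y - g x) / (y - x)) l). lra. }
  assert (0 < Rabs l + 1) by (pose proof (Rabs_pos l); lra).
  apply Rle_lt_trans with ((Rabs l + 1) * Rabs (y - x)).
  { apply Rmult_le_compat_r; lra. }
  apply Rmult_lt_reg_r with (/ (Rabs l + 1)). apply Rinv_0_lt_compat; lra.
  replace ((Rabs l + 1) * Rabs (y - x) * / (Rabs l + 1)) with (Rabs (y - x)) by (field; lra).
  exact Hyx2.
Qed.

Lemma ext_cont L g x : 0 < L -> 0 <= x <= L ->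
  (forall y, 0 <= y <= L -> exists l, deriv_within 0 L g y l) ->
  continuity_pt (fun y => g (clamp L y)) x.
Proof.
  intros HL Hx Hd. apply continuity_pt_locally. intros eps.
  destruct (Hd (clamp L x) (clamp_in L x (Rlt_le _ _ HL))) as [l Hl].
  destruct (deriv_cont L g (clamp L x) l (clamp_in L x (Rlt_le _ _ HL)) Hl eps (cond_pos eps))
    as [d [Hd0 Hd1]].
  exists (mkposreal d Hd0). intros u Hu. simpl.
  apply Hd1. apply clamp_in; lra.
  eapply Rle_lt_trans. apply clamp_lip; lra. exact Hu.
Qed.

Lemma ext_derive L g x l : 0 < x < L -> deriv_within 0 L g x l ->
  is_derive (fun y => g (clamp L y)) x l.
Proof.
  intros Hx Hd. apply is_derive_Reals. intros eps He.
  destruct (Hd eps He) as [d [Hd0 Hd1]].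
  assert (Hp : 0 < Rmin d (Rmin x (L - x))).
  { repeat apply Rmin_glb_lt; lra. }
  exists (mkposreal _ Hp). intros h Hh Hlt. simpl in Hlt.
  assert (Habs := Rlt_le_trans _ _ _ Hlt (Rmin_r _ _)).
  assert (Rabs h < x) by (eapply Rlt_le_trans; [exact Habs| apply Rmin_l]).
  assert (Rabs h < L - x) by (eapply Rlt_le_trans; [exact Habs| apply Rmin_r]).
  assert (Hb: - Rabs h <= h <= Rabs h) by (split; [pose proof (Rabs_pos h); unfold Rabs in *; destruct Rcase_abs; lra | apply RRle_abs]).
  rewrite !clamp_id by lra.
  specialize (Hd1 (x + h)).
  replace (x + h - x) with h in Hd1 by ring.
  apply Hd1; try lra.
  eapply Rlt_le_trans; [exact Hlt| apply Rmin_l].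
Qed.

Lemma mono L g g' a b : 0 < L -> 0 <= a -> a <= b -> b <= L ->
  (forall y, 0 <= y <= L -> deriv_within 0 L g y (g' y)) ->
  (forall y, a < y < b -> 0 <= g' y) -> g a <= g b.
Proof.
  intros HL Ha Hab Hb Hd Hpos.
  destruct (Req_dec a b) as [->|Hne]. lra.
  assert (pr1 : forall c, a < c < b -> derivable_pt (fun y => g (clamp L y)) c).
  { intros c Hc. exists (g' c). apply is_derive_Reals. apply ext_derive. lra. apply Hd; lra. }
  destruct (MVT (fun y => g (clamp L y)) id a b pr1 (fun c _ => derivable_pt_id c)) as [c [P Heq]].
  - lra.
  - intros x Hx. apply ext_cont; try lra. intros y Hy. exists (g' y). auto.
  - intros x Hx. apply derivable_continuous_pt, derivable_pt_id.
  - rewrite derive_pt_id in Heq. unfold id in Heq.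
    rewrite !clamp_id in Heq by lra.
    assert (derive_pt (fun y => g (clamp L y)) c (pr1 c P) = g' c).
    { apply derive_pt_eq_0. apply is_derive_Reals. apply ext_derive. lra. apply Hd; lra. }
    rewrite H in Heq. specialize (Hpos c P).
    assert (0 <= (b - a) * g' c) by (apply Rmult_le_pos; lra). lra.
Qed.

Lemma deriv_comb L g h c y l m : deriv_within 0 L g y l -> is_derive h y m ->
  deriv_within 0 L (fun z => h z + c * g z) y (m + c * l).
Proof.
  intros Hg Hh eps He. apply is_derive_Reals in Hh.
  assert (Hc : 0 < Rabs c + 1) by (pose proof (Rabs_pos c); lra).
  destruct (Hh (eps/2)) as [d1 Hd1]. lra.
  destruct (Hg (eps / 2 / (Rabs c + 1))) as [d2 [Hd2 Hd2']].
  { apply Rdiv_lt_0_compat; lra. }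
  exists (Rmin d1 d2). split. { apply Rmin_glb_lt; auto. apply cond_pos. }
  intros z Hz Hne Hlt.
  assert (Q1 := Hd1 (z - y) ltac:(lra) (Rlt_le_trans _ _ _ Hlt (Rmin_l _ _))).
  replace (y + (z - y)) with z in Q1 by ring.
  assert (Q2 := Hd2' z Hz Hne (Rlt_le_trans _ _ _ Hlt (Rmin_r _ _))).
  replace ((h z + c * g z - (h y + c * g y)) / (z - y) - (m + c * l)) with
    (((h z - h y) / (z - y) - m) + c * ((g z - g y) / (z - y) - l)) by (field; lra).
  eapply Rle_lt_trans. apply Rabs_triang. rewrite Rabs_mult.
  assert (Rabs c * Rabs ((g z - g y) / (z - y) - l) <= (Rabs c + 1) * (eps / 2 / (Rabs c + 1))).
  { apply Rmult_le_compat; try apply Rabs_pos; lra. }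
  replace ((Rabs c + 1) * (eps / 2 / (Rabs c + 1))) with (eps/2) in H by (field; lra).
  lra.
Qed.

Fixpoint psum (c : nat -> R) (n : nat) (s : R) : R :=
  match n with O => 0 | S n => psum c n s + c n * s ^ n end.

Lemma psum_S c n s : psum c (S n) s = c 0%nat + s * psum (fun k => c (S k)) n s.
Proof. induction n as [|n IH]. simpl; ring. change (psum c (S (S n)) s) with (psum c (S n) s + c (S n) * s ^ (S n)).
  rewrite IH. simpl. ring. Qed.

Lemma psum_ext c d n s : (forall k, c k = d k) -> psum c n s = psum d n s.
Proof. intros H. induction n; simpl; auto. rewrite IHn, H. auto. Qed.

Lemma psum_derive c n a y : is_derive (fun z => psum c (S n) (z - a)) y
   (psum (fun k => INR (S k) * c (S k)) n (y - a)).
Proof.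
  induction n as [|n IH].
  - simpl. auto_derive. auto. ring.
  - change (psum (fun k => INR (S k) * c (S k)) (S n) (y - a)) with
      (psum (fun k => INR (S k) * c (S k)) n (y - a) + INR (S n) * c (S n) * (y - a) ^ n).
    apply (is_derive_plus (fun z => psum c (S n) (z - a)) (fun z => c (S n) * (z - a) ^ (S n))).
    exact IH. auto_derive. auto. change (y + - a) with (y - a). rewrite (S_INR n). destruct n; simpl; ring.
Qed.

Lemma fact_div n x : INR (S n) * x / INR (Factorial.fact (S n)) = x / INR (Factorial.fact n).
Proof.
  rewrite fact_simpl, mult_INR. pose proof (INR_fact_neq_0 n).
  assert (INR (S n) <> 0) by (apply not_0_INR; lia). field; auto.
Qed.

Definition tay (D : nat -> R -> R) n a y := psum (fun k => D k a / INR (Factorial.fact k)) n (y - a).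

Lemma tay_derive D n a y : is_derive (fun z => tay D (S n) a z) y (tay (fun k => D (S k)) n a y).
Proof.
  unfold tay. eapply is_derive_ext. intros t. reflexivity.
  replace (psum (fun k => D (S k) a / INR (Factorial.fact k)) n (y - a)) with
    (psum (fun k => INR (S k) * (D (S k) a / INR (Factorial.fact (S k)))) n (y - a)).
  apply psum_derive. apply psum_ext. intros k.
  rewrite <- (fact_div k (D (S k) a)). unfold Rdiv. ring.
Qed.

Lemma tay_at D n a : tay D (S n) a a = D 0%nat a.
Proof. unfold tay. rewrite psum_S. replace (a - a) with 0 by ring. simpl. field. Qed.

Lemma taylor_rem L : 0 < L -> forall n D B,
  (forall k, (k < n)%nat -> forall y, 0 <= y <= L -> deriv_within 0 L (D k) y (D (S k) y)) ->
  (forall y, 0 <= y <= L -> Rabs (D n y) <= B) ->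
  forall a b, 0 <= a <= L -> 0 <= b <= L ->
  Rabs (D 0%nat b - tay D n a b) <= B * Rabs (b - a) ^ n / INR (Factorial.fact n).
Proof.
  intros HL n. induction n as [|n IH]; intros D B Hd HB a b Ha Hb.
  - unfold tay; simpl. rewrite Rminus_0_r. replace (B * 1 / 1) with B by field. auto.
  - assert (IH' : forall y, 0 <= y <= L ->
      Rabs (D 1%nat y - tay (fun k => D (S k)) n a y) <= B * Rabs (y - a) ^ n / INR (Factorial.fact n)).
    { intros y Hy. apply (IH (fun k => D (S k)) B); auto.
      intros k Hk z Hz. apply Hd; auto. lia. }
    assert (Hfp := INR_fact_lt_0 n).
    assert (HD0 : forall y, 0 <= y <= L -> deriv_within 0 L (D 0%nat) y (D 1%nat y)).
    { intros; apply Hd; auto; lia. }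
    assert (Hpsi0 : D 0%nat a - tay D (S n) a a = 0) by (rewrite tay_at; ring).
    destruct (Rle_dec a b) as [Hab|Hab].
    + set (P := fun z => B * (z - a) ^ (S n) / INR (Factorial.fact (S n))).
      assert (HP : forall y, is_derive P y (B * (y - a) ^ n / INR (Factorial.fact n))).
      { intros y. unfold P. auto_derive. auto. rewrite <- (fact_div n). replace (match n with 0%nat => 1 | S _ => INR n + 1 end) with (INR (S n)) by (destruct n; reflexivity). change (Factorial.fact n + n * Factorial.fact n)%nat with (Factorial.fact (S n)). unfold Rminus, Rdiv. ring.
      }
      assert (E: P b = B * Rabs (b - a) ^ S n / INR (Factorial.fact (S n))).
      { unfold P. rewrite Rabs_right by lra. auto. }
      assert (P a = 0). { unfold P. replace (a - a) with 0 by ring. rewrite pow_i by lia. unfold Rdiv. ring. }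
      apply Rabs_le. split.
      * (* -(P) <= psi : use G = P + psi nondecreasing *)
        assert (Hm := mono L (fun z => (P z - tay D (S n) a z) + 1 * D 0%nat z)
            (fun y => (B * (y - a) ^ n / INR (Factorial.fact n) - tay (fun k => D (S k)) n a y) + 1 * D 1%nat y)
            a b HL ltac:(lra) Hab ltac:(lra)).
        simpl in Hm. lapply Hm; [intros Hm2; lapply Hm2 |].
        -- intros. lra.
        -- intros y Hy. specialize (IH' y ltac:(lra)).
           rewrite (Rabs_right (y - a)) in IH' by lra. apply Rabs_le_between in IH'. lra.
        -- intros y Hy. apply deriv_comb. auto. apply (is_derive_minus P (fun z => tay D (S n) a z)). auto. apply tay_derive.
      * assert (Hm := mono L (fun z => (P z + tay D (S n) a z) + (-1) * D 0%nat z)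
            (fun y => (B * (y - a) ^ n / INR (Factorial.fact n) + tay (fun k => D (S k)) n a y) + (-1) * D 1%nat y)
            a b HL ltac:(lra) Hab ltac:(lra)).
        simpl in Hm. lapply Hm; [intros Hm2; lapply Hm2 |].
        -- intros. lra.
        -- intros y Hy. specialize (IH' y ltac:(lra)).
           rewrite (Rabs_right (y - a)) in IH' by lra. apply Rabs_le_between in IH'. lra.
        -- intros y Hy. apply deriv_comb. auto. apply (is_derive_plus P (fun z => tay D (S n) a z)). auto. apply tay_derive.
    + set (P := fun z => - (B * (a - z) ^ (S n) / INR (Factorial.fact (S n)))).
      assert (HP : forall y, is_derive P y (B * (a - y) ^ n / INR (Factorial.fact n))).
      { intros y. unfold P. auto_derive. auto. rewrite <- (fact_div n). replace (match n with 0%nat => 1 | S _ => INR n + 1 end) with (INR (S n)) by (destruct n; reflexivity). change (Factorial.fact n + n * Factorial.fact n)%nat with (Factorial.fact (S n)). unfold Rminus, Rdiv. ring.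
      }
      assert (E: P b = - (B * Rabs (b - a) ^ S n / INR (Factorial.fact (S n)))).
      { unfold P. rewrite Rabs_left by lra. replace (- (b - a)) with (a - b) by ring. auto. }
      assert (P a = 0). { unfold P. replace (a - a) with 0 by ring. rewrite pow_i by lia. unfold Rdiv. ring. }
      apply Rabs_le. split.
      * assert (Hm := mono L (fun z => (P z + tay D (S n) a z) + (-1) * D 0%nat z)
            (fun y => (B * (a - y) ^ n / INR (Factorial.fact n) + tay (fun k => D (S k)) n a y) + (-1) * D 1%nat y)
            b a HL ltac:(lra) ltac:(lra) ltac:(lra)).
        simpl in Hm. lapply Hm; [intros Hm2; lapply Hm2 |].
        -- intros. lra.
        -- intros y Hy. specialize (IH' y ltac:(lra)).
           rewrite (Rabs_left (y - a)) in IH' by lra. replace (- (y - a)) with (a - y) in IH' by ring.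
           apply Rabs_le_between in IH'. lra.
        -- intros y Hy. apply deriv_comb. auto. apply (is_derive_plus P (fun z => tay D (S n) a z)). auto. apply tay_derive.
      * assert (Hm := mono L (fun z => (P z - tay D (S n) a z) + 1 * D 0%nat z)
            (fun y => (B * (a - y) ^ n / INR (Factorial.fact n) - tay (fun k => D (S k)) n a y) + 1 * D 1%nat y)
            b a HL ltac:(lra) ltac:(lra) ltac:(lra)).
        simpl in Hm. lapply Hm; [intros Hm2; lapply Hm2 |].
        -- intros. lra.
        -- intros y Hy. specialize (IH' y ltac:(lra)).
           rewrite (Rabs_left (y - a)) in IH' by lra. replace (- (y - a)) with (a - y) in IH' by ring.
           apply Rabs_le_between in IH'. lra.
        -- intros y Hy. apply deriv_comb. auto. apply (is_derive_minus P (fun z => tay D (S n) a z)). auto. apply tay_derive.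
Qed.

Fixpoint rich (m : nat) (phi : R -> R) (s : R) : R :=
  match m with
  | O => phi s
  | S m' => (2 ^ (S m') * rich m' phi s - rich m' phi (2 * s)) / (2 ^ (S m') - 1)
  end.

Lemma two_pow_gt m : 1 < 2 ^ (S m).
Proof. apply Rlt_pow_R1. lra. lia. Qed.

Lemma rich_ext m phi psi s : (forall t, phi t = psi t) -> rich m phi s = rich m psi s.
Proof. intros H. revert s. induction m; intros s; simpl; auto. rewrite !IHm. auto. Qed.

Lemma rich_plus m phi psi s : rich m (fun t => phi t + psi t) s = rich m phi s + rich m psi s.
Proof. revert s. induction m; intros s; simpl; auto. rewrite !IHm.
  pose proof (two_pow_gt m). simpl in H. field. lra. Qed.

Lemma rich_scal m c phi s : rich m (fun t => c * phi t) s = c * rich m phi s.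
Proof. revert s. induction m; intros s; simpl; auto. rewrite !IHm.
  pose proof (two_pow_gt m). simpl in H. field. lra. Qed.

Lemma rich_zero m s : rich m (fun _ => 0) s = 0.
Proof. revert s. induction m; intros s; simpl; auto. rewrite !IHm.
  pose proof (two_pow_gt m). simpl in H. field. lra. Qed.

Lemma rich_one m s : rich m (fun _ => 1) s = 1.
Proof. revert s. induction m; intros s; simpl; auto. rewrite !IHm.
  pose proof (two_pow_gt m). simpl in H. field. lra. Qed.

Lemma rich_mono m j : exists c, forall s, rich m (fun t => t ^ j) s = c * s ^ j.
Proof. induction m as [|m [c IH]].
  - exists 1. intros; simpl; ring.
  - exists ((2 ^ (S m) - 2 ^ j) / (2 ^ (S m) - 1) * c). intros s.
    change (rich (S m) (fun t => t ^ j) s) with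
      ((2 ^ (S m) * rich m (fun t => t ^ j) s - rich m (fun t => t ^ j) (2 * s)) / (2 ^ (S m) - 1)).
    rewrite !IH. rewrite Rpow_mult_distr.
    pose proof (two_pow_gt m). field. lra.
Qed.

Lemma rich_kill m j s : (1 <= j)%nat -> (j <= m)%nat -> rich m (fun t => t ^ j) s = 0.
Proof.
  intros Hj. revert s. induction m as [|m IH]; intros s Hjm. lia.
  change (rich (S m) (fun t => t ^ j) s) with
      ((2 ^ (S m) * rich m (fun t => t ^ j) s - rich m (fun t => t ^ j) (2 * s)) / (2 ^ (S m) - 1)).
  destruct (Nat.eq_dec j (S m)) as [->|Hne].
  - destruct (rich_mono m (S m)) as [c Hc]. rewrite !Hc. rewrite Rpow_mult_distr.
    unfold Rdiv. ring.
  - rewrite !IH by lia. unfold Rdiv. ring.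
Qed.

Lemma rich_psum m c n s : (n <= m)%nat -> rich m (psum c (S n)) s = c 0%nat.
Proof.
  induction n as [|n IH]; intros Hn.
  - rewrite (rich_ext m _ (fun t => c 0%nat * 1)) by (intros; simpl; ring).
    rewrite rich_scal, rich_one. ring.
  - rewrite (rich_ext m _ (fun t => psum c (S n) t + c (S n) * t ^ (S n))) by (intros; reflexivity).
    rewrite rich_plus, rich_scal, IH by lia. rewrite rich_kill by lia. ring.
Qed.

Lemma rich_bound m phi s B : (forall i, (i <= m)%nat -> Rabs (phi (2 ^ i * s)) <= B) ->
  Rabs (rich m phi s) <= (2 ^ (S m) - 1) * B.
Proof.
  revert s. induction m as [|m IH]; intros s H.
  - simpl. specialize (H 0%nat (le_n _)). simpl in H. rewrite Rmult_1_l in H. lra.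
  - change (rich (S m) phi s) with
      ((2 ^ (S m) * rich m phi s - rich m phi (2 * s)) / (2 ^ (S m) - 1)).
    assert (H1 := IH s ltac:(intros i Hi; apply H; lia)).
    assert (H2 := IH (2 * s) ltac:(intros i Hi; replace (2 ^ i * (2 * s)) with (2 ^ (S i) * s) by (simpl; ring); apply H; lia)).
    pose proof (two_pow_gt m) as Hg.
    assert (HB : 0 <= B). { specialize (H 0%nat ltac:(lia)). pose proof (Rabs_pos (phi (2 ^ 0 * s))). lra. }
    unfold Rdiv. rewrite Rabs_mult, Rabs_inv, (Rabs_right (2 ^ S m - 1)) by lra.
    apply Rmult_le_reg_r with (2 ^ S m - 1). lra.
    rewrite Rmult_assoc, Rinv_l by lra. rewrite Rmult_1_r.
    set (X := 2 ^ S m) in *. change (2 ^ S (S m)) with (2 * X).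
    set (r1 := rich m phi s) in *. set (r2 := rich m phi (2 * s)) in *.
    assert (HX : 2 <= X). { unfold X. simpl. pose proof (pow_R1_Rle 2 m ltac:(lra)). lra. }
    assert (Hc : 0 <= (X - 1) * B) by (apply Rmult_le_pos; lra).
    apply Rle_trans with (X * Rabs r1 + Rabs r2).
    { unfold Rminus. eapply Rle_trans. apply Rabs_triang. rewrite Rabs_mult, Rabs_Ropp, (Rabs_right X) by lra. lra. }
    apply Rle_trans with (X * ((X - 1) * B) + (X - 1) * B).
    { apply Rplus_le_compat; auto. apply Rmult_le_compat_l; lra. }
    assert (0 <= (X - 2) * ((X - 1) * B)) by (apply Rmult_le_pos; lra).
    nra.
Qed.

Lemma pointwise L D m M0 Np : 0 < L ->
  (forall k, (k < S (S m))%nat -> forall y, 0 <= y <= L -> deriv_within 0 L (D k) y (D (S k) y)) ->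
  (forall y, 0 <= y <= L -> Rabs (D 0%nat y) <= M0) ->
  (forall y, 0 <= y <= L -> Rabs (D (S (S m)) y) <= Np) ->
  forall x h, 0 <= x <= L -> 0 < h <= L / 2 ->
  Rabs (D 1%nat x) <= 2 ^ S m * 2 ^ S m * M0 / h + 2 ^ S m * Np * h ^ S m.
Proof.
  intros HL Hd H0 Hp x h Hx Hh.
  assert (HM0 : 0 <= M0) by (pose proof (Rabs_pos (D 0%nat x)); pose proof (H0 x Hx); lra).
  assert (HNp : 0 <= Np) by (pose proof (Rabs_pos (D (S (S m)) x)); pose proof (Hp x Hx); lra).
  assert (H2m : 1 <= 2 ^ m) by (apply pow_R1_Rle; lra).
  set (sg := if Rle_dec x (L / 2) then h / 2 ^ m else - (h / 2 ^ m)).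
  assert (Hsg : Rabs sg = h / 2 ^ m).
  { unfold sg. destruct Rle_dec. apply Rabs_right. apply Rle_ge, Rdiv_le_0_compat; lra.
    rewrite Rabs_Ropp. apply Rabs_right. apply Rle_ge, Rdiv_le_0_compat; lra. }
  assert (Hnode : forall i, (i <= m)%nat ->
     0 <= x + 2 ^ i * sg <= L /\ 2 ^ i * sg <> 0 /\ h / 2 ^ m <= Rabs (2 ^ i * sg) <= h).
  { intros i Hi.
    assert (Hi1 : 1 <= 2 ^ i) by (apply pow_R1_Rle; lra).
    assert (Him : 2 ^ i <= 2 ^ m) by (apply Rle_pow; lra || lia).
    assert (Habs : Rabs (2 ^ i * sg) = 2 ^ i * (h / 2 ^ m)).
    { rewrite Rabs_mult, Hsg, Rabs_right; lra. }
    assert (Hle : 2 ^ i * (h / 2 ^ m) <= h).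
    { apply Rle_trans with (2 ^ m * (h / 2 ^ m)). apply Rmult_le_compat_r.
      apply Rdiv_le_0_compat; lra. auto. right. field. lra. }
    assert (Hge : h / 2 ^ m <= 2 ^ i * (h / 2 ^ m)).
    { rewrite <- (Rmult_1_l (h / 2 ^ m)) at 1. apply Rmult_le_compat_r.
      apply Rdiv_le_0_compat; lra. auto. }
    assert (Hpos : 0 < 2 ^ i * (h / 2 ^ m)) by (apply Rmult_lt_0_compat; [lra|apply Rdiv_lt_0_compat; lra]).
    rewrite Habs. split; [|split; [|lra]].
    - unfold sg. destruct Rle_dec.
      + replace (2 ^ i * (h / 2 ^ m)) with (2 ^ i * (h / 2 ^ m)) by ring. lra.
      + replace (2 ^ i * - (h / 2 ^ m)) with (- (2 ^ i * (h / 2 ^ m))) by ring. lra.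
    - intros E. rewrite E, Rabs_R0 in Habs. lra. }
  set (phi := fun t => (D 0%nat (x + t) - D 0%nat x) / t).
  set (q := psum (fun k => D (S k) x / INR (Factorial.fact (S k))) (S m)).
  set (rho := fun t => phi t - q t).
  assert (Hsplit : rich m phi sg = rich m q sg + rich m rho sg).
  { rewrite <- rich_plus. apply rich_ext. intros t. unfold rho. ring. }
  assert (Hq : rich m q sg = D 1%nat x).
  { unfold q. rewrite rich_psum by lia. simpl. field. }
  assert (Hphi : Rabs (rich m phi sg) <= (2 ^ S m - 1) * (2 ^ S m * M0 / h)).
  { apply rich_bound. intros i Hi. destruct (Hnode i Hi) as [Hin [Hne [Hlo Hhi]]].
    set (t := 2 ^ i * sg) in *. unfold phi.
    unfold Rdiv at 1. rewrite Rabs_mult, Rabs_inv.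
    assert (Hnum : Rabs (D 0%nat (x + t) - D 0%nat x) <= 2 * M0).
    { unfold Rminus. eapply Rle_trans. apply Rabs_triang. rewrite Rabs_Ropp.
      pose proof (H0 _ Hin). pose proof (H0 _ Hx). lra. }
    assert (Htp : 0 < Rabs t) by (apply Rabs_pos_lt; auto).
    apply Rle_trans with (2 * M0 * / Rabs t).
    { apply Rmult_le_compat_r. left; apply Rinv_0_lt_compat; auto. auto. }
    apply Rle_trans with (2 * M0 * / (h / 2 ^ m)).
    { apply Rmult_le_compat_l. lra. apply Rinv_le_contravar. apply Rdiv_lt_0_compat; lra. auto. }
    right. simpl. field. split; lra. }
  assert (Hrho : Rabs (rich m rho sg) <= (2 ^ S m - 1) * (Np * h ^ S m)).
  { apply rich_bound. intros i Hi. destruct (Hnode i Hi) as [Hin [Hne [Hlo Hhi]]].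
    set (t := 2 ^ i * sg) in *.
    assert (Ht : rho t = (D 0%nat (x + t) - tay D (S (S m)) x (x + t)) / t).
    { unfold rho, phi, q, tay. rewrite (psum_S (fun k => D k x / INR (Factorial.fact k)) (S m)). replace (x + t - x) with t by ring. change (INR (Factorial.fact 0)) with 1. field. auto. }
    rewrite Ht. unfold Rdiv. rewrite Rabs_mult, Rabs_inv.
    assert (Htp : 0 < Rabs t) by (apply Rabs_pos_lt; auto).
    pose proof (taylor_rem L HL (S (S m)) D Np Hd Hp x (x + t) Hx Hin) as HT.
    replace (x + t - x) with t in HT by ring.
    assert (Hf : 1 <= INR (Factorial.fact (S (S m)))).
    { apply (le_INR 1). pose proof (Factorial.lt_O_fact (S (S m))). lia. }
    assert (HT2 : Rabs (D 0%nat (x + t) - tay D (S (S m)) x (x + t)) <= Np * Rabs t ^ S (S m)).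
    { eapply Rle_trans. exact HT. unfold Rdiv.
      assert (0 <= Np * Rabs t ^ S (S m)) by (apply Rmult_le_pos; auto; apply pow_le; lra).
      rewrite <- (Rmult_1_r (Np * Rabs t ^ S (S m))) at 2.
      apply Rmult_le_compat_l; auto. rewrite <- Rinv_1. apply Rinv_le_contravar; lra. }
    apply Rle_trans with (Np * Rabs t ^ S (S m) * / Rabs t).
    { apply Rmult_le_compat_r. left; apply Rinv_0_lt_compat; auto. auto. }
    replace (Np * Rabs t ^ S (S m) * / Rabs t) with (Np * Rabs t ^ S m) by (simpl; field; lra).
    apply Rmult_le_compat_l; auto. apply pow_incr. split; [apply Rabs_pos | auto]. }
  assert (E1 : D 1%nat x = rich m phi sg - rich m rho sg) by lra.
  rewrite E1.
  assert (Hg : 1 < 2 ^ S m) by apply two_pow_gt.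
  assert (HA : 0 <= 2 ^ S m * M0 / h) by (apply Rdiv_le_0_compat; [apply Rmult_le_pos; lra| lra]).
  assert (HB : 0 <= Np * h ^ S m) by (apply Rmult_le_pos; auto; apply pow_le; lra).
  unfold Rminus at 1. eapply Rle_trans. apply Rabs_triang. rewrite Rabs_Ropp.
  apply Rle_trans with ((2 ^ S m - 1) * (2 ^ S m * M0 / h) + (2 ^ S m - 1) * (Np * h ^ S m)).
  lra.
  replace (2 ^ S m * 2 ^ S m * M0 / h) with (2 ^ S m * (2 ^ S m * M0 / h)) by (field; lra).
  replace (2 ^ S m * Np * h ^ S m) with (2 ^ S m * (Np * h ^ S m)) by ring.
  nra.
Qed.

Lemma zero_deriv L g x l : 0 < L -> 0 <= x <= L -> (forall y, 0 <= y <= L -> g y = 0) ->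
  deriv_within 0 L g x l -> l = 0.
Proof.
  intros HL Hx Hg Hd. destruct (Req_dec l 0) as [|Hl]; auto. exfalso.
  destruct (Hd (Rabs l) (Rabs_pos_lt _ Hl)) as [d [Hd0 Hd1]].
  set (e := Rmin (d / 2) (L / 2)).
  assert (He : 0 < e) by (apply Rmin_glb_lt; lra).
  assert (He1 : e <= d / 2) by apply Rmin_l. assert (He2 : e <= L / 2) by apply Rmin_r.
  set (y := if Rle_dec x (L / 2) then x + e else x - e).
  assert (Hy : 0 <= y <= L /\ y - x <> 0 /\ Rabs (y - x) < d).
  { unfold y; destruct Rle_dec.
    - replace (x + e - x) with e by ring. rewrite Rabs_right; lra.
    - replace (x - e - x) with (- e) by ring. rewrite Rabs_Ropp, Rabs_right; lra. }
  destruct Hy as [Hy1 [Hy2 Hy3]].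
  specialize (Hd1 y Hy1 ltac:(intro; apply Hy2; lra) Hy3).
  rewrite (Hg y Hy1), (Hg x Hx) in Hd1.
  replace ((0 - 0) / (y - x) - l) with (- l) in Hd1 by (field; auto).
  rewrite Rabs_Ropp in Hd1. lra.
Qed.

Lemma Rpower_pos x y : 0 < Rpower x y.
Proof. unfold Rpower. apply exp_pos. Qed.

Lemma sqrt4 : sqrt 4 = 2.
Proof. replace 4 with (2 * 2) by ring. apply sqrt_square. lra. Qed.

Lemma pow4 m : 4 ^ m = 2 ^ m * 2 ^ m.
Proof. rewrite <- Rpow_mult_distr. f_equal. Qed.

Theorem proposition4p5 (lambda : R) (p : nat) (D : nat -> R -> R)
  (M0 M1 Mp : R) :
  0 < lambda -> (1 <= p)%nat ->
  Cp_derivs 0 (/ 2 * / sqrt lambda) p D ->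
  is_max_on 0 (/ 2 * / sqrt lambda) (fun x => Rabs (D 0%nat x)) M0 ->
  is_max_on 0 (/ 2 * / sqrt lambda) (fun x => Rabs (D 1%nat x)) M1 ->
  is_max_on 0 (/ 2 * / sqrt lambda) (fun x => Rabs (D p x)) Mp ->
  M1 <= Rpower 4 (INR p + / 2) * sqrt lambda * M0 \/
  M1 <= rpow (Mp / M0) (/ INR p) * Rpower 4 (INR p - / 2) * M0.
Proof.
  intros Hl Hp1 [_ Hd] [[x0 [Hx0 E0]] B0] [[x1 [Hx1 E1]] B1] [[xp [Hxp Ep]] Bp].
  set (L := / 2 * / sqrt lambda) in *.
  assert (Hs : 0 < sqrt lambda) by (apply sqrt_lt_R0; auto).
  assert (HL : 0 < L) by (unfold L; apply Rmult_lt_0_compat; apply Rinv_0_lt_compat; lra).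
  assert (HsL : sqrt lambda = / (2 * L)) by (unfold L; field; lra).
  assert (HM0 : 0 <= M0) by (rewrite <- E0; apply Rabs_pos).
  assert (HM1 : 0 <= M1) by (rewrite <- E1; apply Rabs_pos).
  assert (HMp : 0 <= Mp) by (rewrite <- Ep; apply Rabs_pos).
  destruct (Req_dec M1 0) as [Z1|NZ1].
  { left. rewrite Z1. apply Rmult_le_pos; auto. apply Rmult_le_pos; [left; apply Rpower_pos | lra]. }
  destruct (Req_dec M0 0) as [Z0|NZ0].
  { exfalso. apply NZ1. rewrite <- E1.
    assert (Hz : forall y, 0 <= y <= L -> D 0%nat y = 0).
    { intros y Hy. specialize (B0 y Hy). simpl in B0. rewrite Z0 in B0.
      pose proof (Rabs_pos (D 0%nat y)). apply Rabs_eq_0. lra. }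
    rewrite (zero_deriv L (D 0%nat) x1 (D 1%nat x1) HL Hx1 Hz (Hd 0%nat ltac:(lia) x1 Hx1)).
    apply Rabs_R0. }
  assert (PM0 : 0 < M0) by (destruct HM0; [auto| congruence]).
  assert (PM1 : 0 < M1) by (destruct HM1; [auto| congruence]).
  destruct p as [|[|m]]. lia.
  -
    right. assert (Mp = M1).
    { apply Rle_antisym. rewrite <- Ep; apply B1; auto. rewrite <- E1; apply Bp; auto. }
    rewrite H. unfold rpow. destruct Rle_dec as [Hle|Hgt].
    { exfalso. assert (0 < M1 / M0) by (apply Rdiv_lt_0_compat; lra). lra. }
    change (INR 1) with 1. rewrite Rinv_1, Rpower_1 by lra.
    replace (1 - / 2) with (/ 2) by field. rewrite Rpower_sqrt, sqrt4 by lra.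
    replace (M1 / M0 * 2 * M0) with (2 * M1) by (field; lra). lra.
  - set (n := S (S m)) in *.
    assert (Hpw : forall h, 0 < h <= L / 2 -> M1 <= 2 ^ S m * 2 ^ S m * M0 / h + 2 ^ S m * Mp * h ^ S m).
    { intros h Hh. rewrite <- E1. exact (pointwise L D m M0 Mp HL Hd B0 Bp x1 h Hx1 Hh). }
    assert (Hg : 1 <= 2 ^ S m) by (apply pow_R1_Rle; lra).
    set (Bc := 2 ^ S m) in *. set (A := Bc * Bc) in *.
    assert (HAB : Bc <= A) by (unfold A; nra).
    assert (H4n : 4 ^ n = 4 * A) by (unfold n, A, Bc; rewrite pow4; simpl; ring).
    destruct (Rle_dec (Mp * (L / 2) ^ n) M0) as [Hsmall|Hbig].
    + left. specialize (Hpw (L / 2) ltac:(lra)).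
      assert (Hh : 0 < L / 2) by lra.
      assert (Mp * (L / 2) ^ S m <= M0 / (L / 2)).
      { apply Rmult_le_reg_r with (L / 2). auto.
        replace (M0 / (L / 2) * (L / 2)) with M0 by (field; lra).
        replace (Mp * (L / 2) ^ S m * (L / 2)) with (Mp * (L / 2) ^ n) by (unfold n; simpl; ring). auto. }
      assert (HM1b : M1 <= (A + Bc) * (M0 / (L / 2))).
      { assert (Bc * (Mp * (L / 2) ^ S m) <= Bc * (M0 / (L / 2))) by (apply Rmult_le_compat_l; lra).
        replace (Bc * Mp * (L / 2) ^ S m) with (Bc * (Mp * (L / 2) ^ S m)) in Hpw by ring.
        replace (A * M0 / (L / 2)) with (A * (M0 / (L / 2))) in Hpw by (field; lra). lra. }
      rewrite Rpower_plus, Rpower_pow, Rpower_sqrt, sqrt4, H4n, HsL by lra.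
      replace (M0 / (L / 2)) with (4 * (/ (2 * L)) * M0) in HM1b by (field; lra).
      assert (0 <= / (2 * L) * M0) by (apply Rmult_le_pos; [left; apply Rinv_0_lt_compat; lra | lra]).
      nra.
    + right. apply Rnot_le_lt in Hbig.
      assert (PMp : 0 < Mp).
      { destruct (Req_dec Mp 0) as [Z|]; [|lra]. rewrite Z in Hbig. lra. }
      set (h0 := Rpower (M0 / Mp) (/ INR n)).
      assert (Hh0 : 0 < h0) by apply Rpower_pos.
      assert (Hnz : INR n <> 0) by (apply not_0_INR; unfold n; lia).
      assert (Hh0n : h0 ^ n = M0 / Mp).
      { unfold h0. rewrite <- Rpower_pow by apply Rpower_pos. rewrite Rpower_mult.
        replace (/ INR n * INR n) with 1 by (field; auto). apply Rpower_1. apply Rdiv_lt_0_compat; lra. }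
      assert (Hh0L : h0 <= L / 2).
      { destruct (Rle_dec h0 (L / 2)) as [|Hc]; auto. exfalso.
        assert ((L / 2) ^ n <= h0 ^ n) by (apply pow_incr; lra).
        rewrite Hh0n in H.
        assert (Mp * (L / 2) ^ n <= Mp * (M0 / Mp)) by (apply Rmult_le_compat_l; lra).
        replace (Mp * (M0 / Mp)) with M0 in H0 by (field; lra). lra. }
      specialize (Hpw h0 ltac:(lra)).
      assert (Mp * h0 ^ S m = M0 / h0).
      { apply Rmult_eq_reg_r with h0. 2: lra.
        replace (Mp * h0 ^ S m * h0) with (Mp * h0 ^ n) by (unfold n; simpl; ring).
        rewrite Hh0n. field. split; lra. }
      assert (HM1b : M1 <= (A + Bc) * (M0 / h0)).
      { replace (Bc * Mp * h0 ^ S m) with (Bc * (Mp * h0 ^ S m)) in Hpw by ring.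
        rewrite H in Hpw. replace (A * M0 / h0) with (A * (M0 / h0)) in Hpw by (field; lra). lra. }
      unfold rpow. destruct Rle_dec as [Hle|_].
      { exfalso. assert (0 < Mp / M0) by (apply Rdiv_lt_0_compat; lra). lra. }
      assert (Hinv : Rpower (Mp / M0) (/ INR n) = / h0).
      { unfold h0. apply Rmult_eq_reg_r with (Rpower (M0 / Mp) (/ INR n)).
        2: pose proof (Rpower_pos (M0 / Mp) (/ INR n)); lra.
        rewrite Rinv_l by (pose proof (Rpower_pos (M0 / Mp) (/ INR n)); lra).
        rewrite Rpower_mult_distr by (apply Rdiv_lt_0_compat; lra).
        replace (Mp / M0 * (M0 / Mp)) with 1 by (field; lra).
        unfold Rpower. rewrite ln_1, Rmult_0_r. apply exp_0. }
      rewrite Hinv. unfold Rminus. rewrite Rpower_plus, Rpower_Ropp, Rpower_pow, Rpower_sqrt, sqrt4, H4n by lra.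
      replace (/ h0 * (4 * A * / 2) * M0) with (2 * A * (M0 / h0)) by (field; lra).
      assert (0 <= M0 / h0) by (apply Rdiv_le_0_compat; lra).
      nra.
Qed.
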